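(* Let $i\ge 3$ and $k\ge 3$ be integers. Then: (a) $g_2(F_i,F_{i+2},F_{i+k})=(3F_i-1)F_{i+2}-F_i$ whenever $k\ge i+3$; (b) $g_2(F_i,F_{i+2},F_{2i+2})=(F_{i-2}-1)F_{i+2}+F_{2i+2}-F_i$ if $i$ is odd, and $g_2(F_i,F_{i+2},F_{2i+2})=(F_{i+2}-1)F_{i+2}-F_i$ if $i$ is even; (c) $g_2(F_i,F_{i+2},F_{2i+1})=(F_i-1)F_{i+2}+F_{2i+1}-F_i$; (d) $g_2(F_i,F_{i+2},F_{2i})=(2F_i-1)F_{i+2}-F_i$; (e) $g_2(F_i,F_{i+2},F_{2i-1})=(F_{i-4}-1)F_{i+2}+3F_{2i-1}-F_i$ for $i\ge 5$, and $g_2(F_4,F_6,F_7)=F_6+2F_7-F_4=31$; (f) if $r=\lfloor (F_i-1)/F_k\rfloor\ge 2$ (equivalently $k\le i-2$), then $$g_2(F_i,F_{i+2},F_{i+k})=\begin{cases}(F_i-rF_k-1)F_{i+2}+(r+2)F_{i+k}-F_i & \text{if } (F_i-rF_k)F_{i+2}\ge F_{k-2}F_i,\\ (F_k-1)F_{i+2}+(r+1)F_{i+k}-F_i & \text{if } (F_i-rF_k)F_{i+2}< F_{k-2}F_i.\end{cases}$$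
   Context: Fibonacci numbers: $F_0=0$, $F_1=1$, $F_n=F_{n-1}+F_{n-2}$. For positive integers $a_1,\dots,a_l$ with $\gcd(a_1,\dots,a_l)=1$ and an integer $n$, let $d(n;a_1,\dots,a_l)$ be the number of tuples $(x_1,\dots,x_l)$ of nonnegative integers with $a_1x_1+\dots+a_lx_l=n$. For a nonnegative integer $p$, the $p$-Frobenius number $g_p(a_1,\dots,a_l)$ is the largest integer $n$ with $d(n;a_1,\dots,a_l)\le p$. *)

(* Defs.v *)
From mathcomp Require Import all_boot all_order all_algebra.
Set Implicit Arguments. Unset Strict Implicit. Unset Printing Implicit Defensive.
Import Order.TTheory GRing.Theory Num.Theory.

Fixpoint fib (n : nat) : nat :=
  match n with
  | 0 => 0
  | 1 => 1
  | (m.+1 as p).+1 => fib p + fib m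
  end.

(* For positive a, b, c every solution has x, y, z <= n,
   so the triples can be enumerated in 'I_n.+1 ^3. *)
Definition dnat (a b c n : nat) : nat :=
  #|[set t : 'I_n.+1 * 'I_n.+1 * 'I_n.+1 |
       a * t.1.1 + b * t.1.2 + c * t.2 == n]|.

Definition d3 (a b c : nat) (n : int) : nat :=
  match n with
  | Posz m => dnat a b c m
  | Negz _ => 0
  end.

Definition is_gp (p a b c : nat) (g : int) : Prop :=
  (d3 a b c g <= p)%N /\ forall n : int, (g < n)%R -> (p < d3 a b c n)%N.

(* Main.v *)
Require Import Defs.
From mathcomp Require Import all_boot all_order all_algebra.
From mathcomp Require Import zify ring lra.
Import Order.TTheory GRing.Theory Num.Theory.
Set Implicit Arguments. Unset Strict Implicit. Unset Printing Implicit Defensive.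

Lemma dnat_le2 (a b c G : nat) (y1 z1 y2 z2 : nat) :
  0 < a ->
  (forall x y z, a * x + b * y + c * z = G -> (y, z) = (y1, z1) \/ (y, z) = (y2, z2)) ->
  dnat a b c G <= 2.
Proof.
move=> a0 H.
rewrite /dnat cardE.
set A := [set _ | _].
pose f := fun t : 'I_G.+1 * 'I_G.+1 * 'I_G.+1 => ((t.1.2 : nat), (t.2 : nat)).
rewrite -(size_map f).
have -> : 2 = size [:: (y1, z1); (y2, z2)] by [].
apply: uniq_leq_size.
  rewrite map_inj_in_uniq ?enum_uniq //.
  move=> [[x y] z] [[x' y'] z']; rewrite !mem_enum !inE /= /f => /eqP E1 /eqP E2 [Ey Ez].
  have Ex : (x : nat) = x'.
    have : a * x = a * x' by lia.
    by move/eqP; rewrite eqn_mul2l gtn_eqF //= => /eqP.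
  by congr (_, _, _); apply: val_inj.
move=> w /mapP [[[x y] z] + ->]; rewrite mem_enum inE /= => /eqP E.
by rewrite !inE /f; case: (H _ _ _ E) => ->; rewrite eqxx ?orbT.
Qed.

Lemma sol_of (a b c p q u kn n T y z k : nat) : 0 < a ->
  u * b = kn * a + 1 -> c + q * a = p * b ->
  y + p * z = k * a + (n * u) %% a -> b * y + c * z <= T -> T < n + a ->
  exists x, a * x + b * y + c * z = n.
Proof.
move=> a0 Hu Hc Hy Hv Hn.
set s := (n * u) %% a in Hy.
set w := (n * u) %/ a.
have Hd : n * u = w * a + s by rewrite /s /w -divn_eq.
have E1 : b * y + b * p * z = b * k * a + b * s.
  by rewrite -mulnA -mulnDr Hy mulnDr mulnA.
have E2 : c * z + q * a * z = p * b * z by rewrite -mulnDl Hc.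
have E3 : b * (n * u) = b * w * a + b * s by rewrite Hd mulnDr mulnA.
have E4 : n * (u * b) = n * kn * a + n by rewrite Hu mulnDr mulnA muln1.
have E : b * y + c * z + a * (q * z + b * w) = n + a * (b * k + n * kn).
  have : b * (n * u) = n * (u * b) by rewrite mulnC -mulnA.
  lia.
have Hle : b * k + n * kn <= q * z + b * w.
  rewrite leqNgt; apply/negP => H.
  have : a * (q * z + b * w) + a <= a * (b * k + n * kn).
    by rewrite -mulnSr leq_mul2l H orbT.
  lia.
exists (q * z + b * w - (b * k + n * kn)).
have := leq_mul2l a (b * k + n * kn) (q * z + b * w); rewrite Hle orbT => H2.
rewrite mulnBr; lia.
Qed.

Definition pgood (a b c p T s y z : nat) :=
  exists k, y + p * z = k * a + s /\ b * y + c * z <= T.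

Definition three (a b c p T s : nat) :=
  exists y1 z1 y2 z2 y3 z3,
    [/\ pgood a b c p T s y1 z1, pgood a b c p T s y2 z2, pgood a b c p T s y3 z3 &
     [/\ (y1, z1) <> (y2, z2), (y2, z2) <> (y3, z3) & (y3, z3) <> (y1, z1)]].

Lemma mk_trip (a b c n x y z : nat) : 0 < a -> 0 < b -> 0 < c ->
  a * x + b * y + c * z = n ->
  exists t : 'I_n.+1 * 'I_n.+1 * 'I_n.+1,
    t \in [set t : 'I_n.+1 * 'I_n.+1 * 'I_n.+1 |
       a * t.1.1 + b * t.1.2 + c * t.2 == n] /\ ((t.1.2 : nat), (t.2 : nat)) = (y, z).
Proof.
move=> a0 b0 c0 E.
have hx : x < n.+1 by rewrite ltnS; nia.
have hy : y < n.+1 by rewrite ltnS; nia.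
have hz : z < n.+1 by rewrite ltnS; nia.
exists (Ordinal hx, Ordinal hy, Ordinal hz); split => //.
by rewrite inE /= E.
Qed.

Lemma dnat_ge3 (a b c p q T : nat) : 0 < a -> 0 < b -> 0 < c -> coprime a b ->
  c + q * a = p * b -> (forall s, s < a -> three a b c p T s) ->
  forall n, T < n + a -> 2 < dnat a b c n.
Proof.
move=> a0 b0 c0 cop Hc H n Hn.
case: (egcdnP a b0) => u kn Hu _.
have g1 : gcdn b a = 1 by rewrite gcdnC; apply/eqP.
rewrite g1 in Hu.
have := H ((n * u) %% a) (ltn_pmod _ a0).
move=> [y1 [z1 [y2 [z2 [y3 [z3 [[k1 [H1 V1]] [k2 [H2 V2]] [k3 [H3 V3]] [D12 D23 D31]]]]]]]].
have [x1 E1] := sol_of a0 Hu Hc H1 V1 Hn.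
have [x2 E2] := sol_of a0 Hu Hc H2 V2 Hn.
have [x3 E3] := sol_of a0 Hu Hc H3 V3 Hn.
have [t1 [T1 P1]] := mk_trip a0 b0 c0 E1.
have [t2 [T2 P2]] := mk_trip a0 b0 c0 E2.
have [t3 [T3 P3]] := mk_trip a0 b0 c0 E3.
apply/card_gt2P; exists t1, t2, t3; split; first by split.
split; apply/eqP => E.
- by apply: D12; rewrite -P1 -P2 E.
- by apply: D23; rewrite -P2 -P3 E.
- by apply: D31; rewrite -P3 -P1 E.
Qed.

Lemma lower_param (a b c p q A B x y z : nat) : 0 < a -> coprime a b ->
  c + q * a = p * b -> q * B < p * A + c ->
  a * x + b * y + c * z + a * A = b * B ->
  exists t, y + p * z + a * t = B /\ x + A = b * t + q * z.
Proof.
move=> a0 cop Hc Hq E.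
have Ez : c * z + q * a * z = p * b * z by rewrite -mulnDl Hc.
have [le|lt] := leqP (y + p * z) B.
- have E2 : a * (x + A) = b * (B - (y + p * z)) + a * (q * z).
    rewrite mulnBr !mulnDr. 
    have : b * (y + p * z) <= b * B by rewrite leq_mul2l le orbT.
    rewrite !mulnDr. nia.
  have : a %| b * (B - (y + p * z)).
    have E3 : b * (B - (y + p * z)) = a * (x + A - q * z) by rewrite [RHS]mulnBr E2 addnK.
    by rewrite E3 dvdn_mulr.
  rewrite Gauss_dvdr // => /dvdnP [t Ht].
  exists t; split; first by nia.
  have : a * (x + A) = a * (b * t + q * z) by rewrite E2 Ht; nia.
  by move/eqP; rewrite eqn_mul2l gtn_eqF //= => /eqP.
- exfalso.
  have E2 : a * x + b * (y + p * z - B) + a * A = a * (q * z).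
    rewrite mulnBr !mulnDr. nia.
  have : a %| b * (y + p * z - B).
    have E3 : b * (y + p * z - B) = a * (q * z - x - A).
      rewrite [RHS]mulnBr [a * (_ - x)]mulnBr. move: E2; set D := (y + p * z - B). lia.
    by rewrite E3 dvdn_mulr.
  rewrite Gauss_dvdr // => /dvdnP [t Ht].
  have t1 : 0 < t.
    rewrite lt0n; apply/eqP => t0; rewrite t0 mul0n in Ht; lia.
  have Ha : y + p * z = B + t * a by lia.
  have Hb : x + b * t + A = q * z.
    have : a * (x + b * t + A) = a * (q * z) by rewrite -E2 Ht; nia.
    by move/eqP; rewrite eqn_mul2l gtn_eqF //= => /eqP.
  have F1 : q * y + q * p * z = q * B + q * t * a by rewrite -mulnA -mulnDr Ha mulnDr mulnA.
  have F2 : p * x + p * b * t + p * A = p * q * z by rewrite -mulnA -!mulnDr Hb mulnA.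
  have F3 : c * t + q * a * t = p * b * t by rewrite -mulnDl Hc.
  have F4 : c <= c * t by rewrite leq_pmulr.
  nia.
Qed.

Lemma case_gp (a b c p q T A B y1 z1 y2 z2 : nat) (G : int) :
  0 < a -> 0 < b -> 0 < c -> coprime a b -> c + q * a = p * b -> a <= T ->
  G = Posz (T - a) ->
  (forall s, s < a -> three a b c p T s) ->
  T - a + a * A = b * B -> q * B < p * A + c ->
  (forall x y z t, y + p * z + a * t = B -> x + A = b * t + q * z ->
     (y, z) = (y1, z1) \/ (y, z) = (y2, z2)) ->
  is_gp 2 a b c G.
Proof.
move=> a0 b0 c0 cop Hc aT -> Hup HB Hq Hlow; split.
  rewrite /d3; apply: (@dnat_le2 a b c (T - a) y1 z1 y2 z2 a0) => x y z E.
  have E' : a * x + b * y + c * z + a * A = b * B by rewrite E.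
  have [t [H1 H2]] := lower_param a0 cop Hc Hq E'.
  exact: Hlow H1 H2.
case=> [m|m] //= Hm.
apply: (dnat_ge3 a0 b0 c0 cop Hc Hup).
move: Hm; rewrite ltz_nat; lia.
Qed.

Lemma fibSS n : fib n.+2 = fib n.+1 + fib n.
Proof. by []. Qed.

Lemma fib_add m n : fib (m + n.+1) = fib m.+1 * fib n.+1 + fib m * fib n.
Proof.
have : fib (m + n.+1) = fib m.+1 * fib n.+1 + fib m * fib n /\
       fib (m.+1 + n.+1) = fib m.+2 * fib n.+1 + fib m.+1 * fib n.
  elim: m => [|m [IH1 IH2]].
    by rewrite add0n add1n /= !mul1n mul0n addn0.
  split => //.
  rewrite (_ : m.+2 + n.+1 = (m + n.+1).+2) ?fibSS; last by lia.
  rewrite (_ : (m + n.+1).+1 = m.+1 + n.+1) ?IH2; last by lia.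
  rewrite IH1 !fibSS; ring.
by case.
Qed.

Lemma fib_key i k : 2 <= k -> fib (i + k) + fib (k - 2) * fib i = fib k * fib (i + 2).
Proof.
case: k => [|[|j]] // _.
rewrite subn2 /= (_ : i + j.+2 = j.+1 + i.+1); last by lia.
rewrite fib_add addn2 !fibSS; ring.
Qed.

Lemma fib_coprime1 n : coprime (fib n) (fib n.+1).
Proof.
elim: n => [|n IH] //.
by rewrite /coprime fibSS gcdnDl gcdnC.
Qed.

Lemma fib_coprime2 n : coprime (fib n) (fib (n + 2)).
Proof. rewrite addn2 /coprime fibSS gcdnDr; exact: fib_coprime1. Qed.

Lemma fib_mono n : fib n <= fib n.+1.
Proof. by case: n => [|n] //; rewrite fibSS leq_addr. Qed.

Lemma fib_pos n : 0 < fib n.+1.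
Proof.
elim: n => [|n IH] //; rewrite fibSS; lia.
Qed.

Lemma fib_cassini n : fib n * fib n.+2 + ~~ odd n = fib n.+1 * fib n.+1 + odd n.
Proof.
elim: n => [|n IH] //.
rewrite /= negbK.
rewrite !fibSS in IH *.
move: IH; case: (odd n) => /=; nia.
Qed.

Lemma fib_rec n : 2 <= n -> fib n = fib (n - 1) + fib (n - 2).
Proof. by case: n => [|[|n]] // _; rewrite fibSS subn1 subn2. Qed.

Lemma fib_leq m n : m <= n -> fib m <= fib n.
Proof.
move=> /subnKC <-; elim: (n - m) => [|d IH]; first by rewrite addn0.
by apply: (leq_trans IH); rewrite addnS fib_mono.
Qed.

Lemma lem_mul (b y Y : nat) : y <= Y -> b * y <= b * Y.
Proof. by move=> h; rewrite leq_mul2l h orbT. Qed.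

Lemma pg (a b c p T s y z k Y : nat) : y + p * z = k * a + s -> y <= Y ->
  b * Y + c * z <= T -> pgood a b c p T s y z.
Proof.
move=> H1 H2 H3; exists k; split => //.
apply: leq_trans H3; rewrite leq_add2r; exact: lem_mul.
Qed.

Lemma fib_gt0 n : 0 < n -> 0 < fib n.
Proof. by case: n => [|n] // _; apply: fib_pos. Qed.


Lemma a_three (a b c p s : nat) : 0 < a -> s < a -> three a b c p ((3 * a - 1) * b) s.
Proof.
move=> a0 sa.
exists s, 0, (s + a), 0, (s + 2 * a), 0; split.
* by exists 0; split; nia.
* by exists 1; split; nia.
* by exists 2; split; nia.
* split; case => *; lia.
Qed.

Lemma a_low (a b p q x y z t : nat) : 0 < a -> 3 * a <= p ->
  y + p * z + a * t = 3 * a - 1 -> x + 1 = b * t + q * z ->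
  (y, z) = (2 * a - 1, 0) \/ (y, z) = (a - 1, 0).
Proof.
move=> a0 pa H1 H2.
case: z H1 H2 => [|z]; last by nia.
case: t => [|[|[|t]]] H1 H2; try nia.
+ left; congr (_, _); lia.
+ right; congr (_, _); lia.
Qed.

Lemma a_arith (a b c p q : nat) : 0 < a -> 0 < q -> 2 * q <= p -> 2 * a <= b ->
  c + q * a = p * b ->
  [/\ a <= (3 * a - 1) * b, (3 * a - 1) * b - a + a * 1 = b * (3 * a - 1)
    & q * (3 * a - 1) < p * 1 + c].
Proof.
move=> a0 q0 qp ab Hc.
have H4 : 4 * (q * a) <= p * b by nia.
case: a a0 ab Hc H4 => [|a1] // _ ab Hc H4.
rewrite (_ : 3 * a1.+1 - 1 = 3 * a1 + 2); last by lia.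
split; nia.
Qed.

Lemma case_a i k G : 3 <= i -> i + 3 <= k ->
  G = Posz ((3 * fib i - 1) * fib (i + 2) - fib i) ->
  is_gp 2 (fib i) (fib (i + 2)) (fib (i + k)) G.
Proof.
move=> hi hk HG.
have Hk := fib_key i (ltac:(lia) : 2 <= k).
have cop := fib_coprime2 i.
have F1 := fib_rec (ltac:(lia) : 2 <= i + 2).
rewrite (_ : i + 2 - 1 = i + 1) in F1; last by lia.
rewrite (_ : i + 2 - 2 = i) in F1; last by lia.
have F2 := fib_rec (ltac:(lia) : 2 <= k).
have Fm : fib (i + 3) <= fib k by apply: fib_leq; lia.
have F3 := fib_rec (ltac:(lia) : 2 <= i + 3).
rewrite (_ : i + 3 - 1 = i + 2) in F3; last by lia.
rewrite (_ : i + 3 - 2 = i + 1) in F3; last by lia.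
have m1 : fib i <= fib (i + 1) by apply: fib_leq; lia.
have m2 : fib (k - 2) <= fib (k - 1) by apply: fib_leq; lia.
have a0 : 0 < fib i by have := fib_pos (i - 1); rewrite (_ : (i - 1).+1 = i) //; lia.
have q0 : 0 < fib (k - 2) by have := fib_pos (k - 3); rewrite (_ : (k - 3).+1 = k - 2) //; lia.
move: HG Hk cop F1 F2 F3 Fm m1 m2 a0 q0.
set a := fib i; set b := fib (i + 2); set c := fib (i + k); set p := fib k.
set q := fib (k - 2); set a1 := fib (i + 1); set b3 := fib (i + 3); set p1 := fib (k - 1).
clearbody a b c p q a1 b3 p1 => HG Hk cop F1 F2 F3 Fm m1 m2 a0 q0.
have qp : 2 * q <= p by lia.
have ab : 2 * a <= b by lia.
have pa : 3 * a <= p by lia.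
have b0 : 0 < b by lia.
have c0 : 0 < c by nia.
case: (a_arith a0 q0 qp ab Hk) => H1 H2 H3.
apply: (@case_gp a b c p q ((3 * a - 1) * b) 1 (3 * a - 1)
  (2 * a - 1) 0 (a - 1) 0) => //.
- move=> s hs; exact: a_three.
- move=> x y z t; exact: (a_low a0 pa).
Qed.



Lemma b_three_gen (a b c e r T s : nat) : 0 < r -> 0 < e -> b = 2 * a + e -> a = e + r ->
  b * (2 * a - 1) <= T -> b * (b - 1) <= T -> b * (r - 1) + c <= T -> s < a ->
  three a b c b T s.
Proof.
move=> r0 e0 Hb Ha H1 H2 H3 sa.
have [se|se] := leqP e s.
+ exists s, 0, (s + a), 0, (s - e), 1; split.
  * exists 0; split; first lia. rewrite muln0 addn0; apply: leq_trans H1; apply: lem_mul; lia.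
  * exists 1; split; first lia. rewrite muln0 addn0; apply: leq_trans H1; apply: lem_mul; lia.
  * exists 2; split; first lia. rewrite muln1; apply: leq_trans H3; rewrite leq_add2r; apply: lem_mul; lia.
  * split; case => *; lia.
+ exists s, 0, (s + a), 0, (s + 2 * a), 0; split.
  * exists 0; split; first lia. rewrite muln0 addn0; apply: leq_trans H1; apply: lem_mul; lia.
  * exists 1; split; first lia. rewrite muln0 addn0; apply: leq_trans H1; apply: lem_mul; lia.
  * exists 2; split; first lia. rewrite muln0 addn0; apply: leq_trans H2; apply: lem_mul; lia.
  * split; case => *; lia.
Qed.

Lemma b_low_even (a b e r x y z t : nat) : 0 < r -> 0 < e -> b = 2 * a + e -> a = e + r ->
  y + b * z + a * t = b - 1 -> x + 1 = b * t + a * z ->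
  (y, z) = (b - 1 - a, 0) \/ (y, z) = (b - 1 - 2 * a, 0).
Proof.
move=> r0 e0 Hb Ha H1 H2.
case: z H1 H2 => [|z]; last by rewrite mulnS; lia.
case: t => [|[|[|t]]] H1 H2; rewrite ?mulnS ?muln0 in H1 H2; try lia.
+ left; congr (_, _); lia.
+ right; congr (_, _); lia.
Qed.

Lemma b_low_odd (a b e r x y z t : nat) : 0 < r -> 0 < e -> b = 2 * a + e -> a = e + r ->
  y + b * z + a * t = r - 1 + b -> x + (a + 1) = b * t + a * z ->
  (y, z) = (r - 1 + b - a, 0) \/ (y, z) = (r - 1 + b - 2 * a, 0).
Proof.
move=> r0 e0 Hb Ha H1 H2.
case: z H1 H2 => [|[|z]] H1 H2; rewrite ?mulnS ?muln0 in H1 H2; try lia.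
- case: t H1 H2 => [|[|[|t]]] H1 H2; rewrite ?mulnS ?muln0 in H1 H2; try lia.
  + left; congr (_, _); lia.
  + right; congr (_, _); lia.
- case: t H1 H2 => [|t] H1 H2; rewrite ?mulnS ?muln0 in H1 H2; lia.
Qed.

Lemma case_b i G1 G2 : 3 <= i ->
  (odd i -> G1 = Posz ((fib (i - 2) - 1) * fib (i + 2) + fib (2 * i + 2) - fib i) ->
   is_gp 2 (fib i) (fib (i + 2)) (fib (2 * i + 2)) G1) /\
  (~~ odd i -> G2 = Posz ((fib (i + 2) - 1) * fib (i + 2) - fib i) ->
   is_gp 2 (fib i) (fib (i + 2)) (fib (2 * i + 2)) G2).
Proof.
move=> hi.
have Hk := fib_key i (k := i + 2) (ltac:(lia) : 2 <= i + 2).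
rewrite (_ : i + (i + 2) = 2 * i + 2) in Hk; last by lia.
rewrite (_ : i + 2 - 2 = i) in Hk; last by lia.
have cop := fib_coprime2 i.
have F1 := fib_rec (ltac:(lia) : 2 <= i + 2).
rewrite (_ : i + 2 - 1 = i + 1) in F1; last by lia.
rewrite (_ : i + 2 - 2 = i) in F1; last by lia.
have F2 := fib_rec (ltac:(lia) : 2 <= i + 1).
rewrite (_ : i + 1 - 1 = i) in F2; last by lia.
rewrite (_ : i + 1 - 2 = i - 1) in F2; last by lia.
have F3 := fib_rec (ltac:(lia) : 2 <= i).
have Cas := fib_cassini (i - 2).
rewrite (_ : (i - 2).+2 = i) in Cas; last by lia.
rewrite (_ : (i - 2).+1 = i - 1) in Cas; last by lia.
have Hodd : odd (i - 2) = odd i.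
  by rewrite -{2}(subnK (ltac:(lia) : 2 <= i)) oddD /= addbF.
rewrite Hodd in Cas.
have r0 : 0 < fib (i - 2) by have := fib_pos (i - 3); rewrite (_ : (i - 3).+1 = i - 2) //; lia.
have e0 : 0 < fib (i - 1) by have := fib_pos (i - 2); rewrite (_ : (i - 2).+1 = i - 1) //; lia.
have re : fib (i - 2) <= fib (i - 1) by apply: fib_leq; lia.
move: Hk cop F1 F2 F3 Cas r0 e0 re.
set a := fib i; set b := fib (i + 2); set c := fib (2 * i + 2); set a1 := fib (i + 1).
set e := fib (i - 1); set r := fib (i - 2).
clearbody a b c a1 e r => Hk cop F1 F2 F3 Cas r0 e0 re.
have Hb : b = 2 * a + e by lia.
have Ha : a = e + r by lia.
have a0 : 0 < a by lia.
have b0 : 0 < b by lia.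
have Cat : a * a + odd i = b * r + ~~ odd i.
  rewrite Hb Ha; rewrite Ha in Cas; case: (odd i) Cas => /=; lia.
have aa : a <= a * a by rewrite -{1}(muln1 a) leq_mul2l a0 orbT.
have ab2 : a * a <= a * b by apply: lem_mul; lia.
have bb2 : a * b <= b * b by rewrite mulnC; apply: lem_mul; lia.
have bb : b <= b * b by rewrite -{1}(muln1 b) leq_mul2l b0 orbT.
have c0 : 0 < c by lia.
have ar : a * r <= a * a by apply: lem_mul; lia.
split => Hi HG.
- rewrite Hi /= in Cat.
  have br : b <= b * r by rewrite -{1}(muln1 b) leq_mul2l r0 orbT.
  have T1 : b * (b - 1) <= (r - 1) * b + c.
    rewrite ?(mulnBl, mulnBr, mulnDl, mulnDr, muln1, mul1n); lia.
  apply: (@case_gp a b c b a ((r - 1) * b + c) (a + 1) (r - 1 + b)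
    (r - 1 + b - a) 0 (r - 1 + b - 2 * a) 0) => //.
  + rewrite ?(mulnBl, mulnBr, mulnDl, mulnDr, muln1, mul1n); lia.
  + move=> s hs; apply: (b_three_gen r0 e0 Hb Ha) => //.
    * apply: leq_trans T1; apply: lem_mul; lia.
    * by rewrite mulnC.
  + rewrite ?(mulnBl, mulnBr, mulnDl, mulnDr, muln1, mul1n); lia.
  + rewrite ?(mulnBl, mulnBr, mulnDl, mulnDr, muln1, mul1n); lia.
  + move=> x y z t; exact: (b_low_odd r0 e0 Hb Ha).
- move/negbTE: Hi => Hi; rewrite Hi /= in Cat.
  have br : b <= b * r by rewrite -{1}(muln1 b) leq_mul2l r0 orbT.
  apply: (@case_gp a b c b a ((b - 1) * b) 1 (b - 1)
    (b - 1 - a) 0 (b - 1 - 2 * a) 0) => //.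
  + rewrite ?(mulnBl, mulnBr, mulnDl, mulnDr, muln1, mul1n); lia.
  + move=> s hs; apply: (b_three_gen r0 e0 Hb Ha) => //.
    * rewrite [(b - 1) * b]mulnC; apply: lem_mul; lia.
    * by rewrite mulnC.
    * rewrite ?(mulnBl, mulnBr, mulnDl, mulnDr, muln1, mul1n); lia.
  + rewrite ?(mulnBl, mulnBr, mulnDl, mulnDr, muln1, mul1n); lia.
  + rewrite ?(mulnBl, mulnBr, mulnDl, mulnDr, muln1, mul1n); lia.
  + move=> x y z t; exact: (b_low_even r0 e0 Hb Ha).
Qed.


Lemma c_three (a b c p q s : nat) : 0 < q -> q <= a -> p = a + q -> b = 2 * a + q ->
  c + q * a = p * b -> s < a -> three a b c p ((a - 1) * b + c) s.
Proof.
move=> q0 qa -> -> Hc sa.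
have abc : a * (2 * a + q) <= c by nia.
have [sv|sv] := leqP q s.
+ exists s, 0, (s + a), 0, (s - q), 1; split.
  * exists 0; split; nia.
  * exists 1; split; nia.
  * exists 1; split; nia.
  * split; case => *; lia.
+ exists s, 0, (s + a), 0, (s + a - q), 1; split.
  * exists 0; split; nia.
  * exists 1; split; nia.
  * exists 2; split; nia.
  * split; case => *; lia.
Qed.

Lemma c_low (a b p q x y z t : nat) : 0 < q -> q <= a -> p = a + q ->
  y + p * z + a * t = a - 1 + p -> x + (q + 1) = b * t + q * z ->
  (y, z) = (p - 1, 0) \/ (y, z) = (q - 1, 0).
Proof.
move=> q0 qa -> H1 H2.
case: z H1 H2 => [|[|z]]; case: t => [|[|[|t]]] H1 H2; try nia.
+ left; congr (_, _); lia.
+ right; congr (_, _); lia.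
Qed.

Lemma c_arith (a b c p q : nat) : 0 < q -> q <= a -> p = a + q -> b = 2 * a + q ->
  c + q * a = p * b ->
  [/\ a <= (a - 1) * b + c, (a - 1) * b + c - a + a * (q + 1) = b * (a - 1 + p)
    & q * (a - 1 + p) < p * (q + 1) + c].
Proof.
move=> q0 qa Hp Hb Hc.
case: a qa Hp Hb Hc => [|a1] *; first lia.
subst; rewrite subn1 /=; split; lia.
Qed.

Lemma case_c i G : 3 <= i ->
  G = Posz ((fib i - 1) * fib (i + 2) + fib (2 * i + 1) - fib i) ->
  is_gp 2 (fib i) (fib (i + 2)) (fib (2 * i + 1)) G.
Proof.
move=> hi HG.
have Hk := fib_key i (k := i + 1) (ltac:(lia) : 2 <= i + 1).
rewrite (_ : i + (i + 1) = 2 * i + 1) in Hk; last by lia.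
rewrite (_ : i + 1 - 2 = i - 1) in Hk; last by lia.
have cop := fib_coprime2 i.
have F1 := fib_rec (ltac:(lia) : 2 <= i + 2).
have F2 := fib_rec (ltac:(lia) : 2 <= i + 1).
have F3 := fib_rec (ltac:(lia) : 2 <= i).
rewrite (_ : i + 2 - 1 = i + 1) in F1; last by lia.
rewrite (_ : i + 2 - 2 = i) in F1; last by lia.
rewrite (_ : i + 1 - 1 = i) in F2; last by lia.
rewrite (_ : i + 1 - 2 = i - 1) in F2; last by lia.
have q0 : 0 < fib (i - 1).
  by have := fib_pos (i - 2); rewrite (_ : (i - 2).+1 = i - 1) //; lia.
have qa : fib (i - 1) <= fib i.
  by have := fib_mono (i - 1); rewrite (_ : (i - 1).+1 = i) //; lia.
move: HG Hk cop F1 F2 F3 q0 qa.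
set a := fib i; set b := fib (i + 2); set c := fib (2 * i + 1); set p := fib (i + 1).
set q := fib (i - 1); set r := fib (i - 2).
clearbody a b c p q r => HG Hk cop F1 F2 F3 q0 qa.
have Hp : p = a + q by lia.
have Hb : b = 2 * a + q by lia.
have abc : a * (2 * a + q) <= c by nia.
apply: (@case_gp a b c p q ((a - 1) * b + c) (q + 1) (a - 1 + p)
  (p - 1) 0 (q - 1) 0) => //; try lia.
- by case: (c_arith q0 qa Hp Hb Hk).
- move=> s hs; exact: (c_three q0 qa Hp Hb Hk hs).
- move=> x y z t; exact: (c_low q0 qa Hp).
Qed.


Lemma case_d i G : 3 <= i ->
  G = Posz ((2 * fib i - 1) * fib (i + 2) - fib i) ->
  is_gp 2 (fib i) (fib (i + 2)) (fib (2 * i)) G.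
Proof.
move=> hi HG.
have Hk := fib_key i (k := i) (leq_trans (isT : 2 <= 3) hi).
rewrite addnn -mul2n in Hk.
have cop := fib_coprime2 i.
case: i hi HG Hk cop => [|[|j]] // hi.
rewrite (_ : j.+2 - 2 = j) ?addn2; last by lia.
rewrite [fib j.+4]fibSS [fib j.+3]fibSS [fib j.+2]fibSS.
have u0 : 0 < fib j by case: j hi => [|j] // _; exact: fib_pos.
set u := fib j; set v := fib j.+1.
have v0 : 0 < v by apply: fib_pos.
set c := fib (2 * j.+2).
move=> HG Hk cop.
have uv : u <= v by apply: fib_mono.
have Hc' : c = (v + u) * (u + 3 * v) by nia.
have c0 : 0 < c by nia.
apply: (@case_gp (v + u) (v + u + v + (v + u)) c (v + u) u
  ((2 * (v + u) - 1) * (v + u + v + (v + u))) 1 (2 * (v + u) - 1)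
  (v + u - 1) 1 (v + u - 1) 0) => //; try lia.
- nia.
- move=> s hs; exists s, 0, (s + (v + u)), 0, s, 1; split.
  + exists 0; split; nia.
  + exists 1; split; nia.
  + exists 1; split; nia.
  + split; case; lia.
- nia.
- rewrite Hc'; nia.
- move=> x y z t H1 H2.
  have : z + t <= 1 by nia.
  case: z H1 H2 => [|[|z]] //; case: t => [|[|t]] //= H1 H2; try lia.
  + right; congr (_, _); lia.
  + left; congr (_, _); lia.
Qed.


Section E.
Variables (e4 e5 c : nat).
Hypotheses (e40 : 0 < e4) (e54 : e5 <= e4).
Let q := e4 + e5.
Let e2 := q + e4.
Let p := e2 + q.
Let a := p + e2.
Let b := 2 * a + p.
Hypothesis Hc : c + q * a = p * b.
Let T := (e4 - 1) * b + 3 * c.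

Lemma e_U1 : b * (a - 1) + c * 1 <= T.
Proof.
have h1 : e5 * e5 <= e4 * e5 by rewrite mulnC; apply: lem_mul.
have h2 : e4 * e5 <= e4 * e4 by apply: lem_mul.
move: Hc; rewrite /T /b /a /p /e2 /q.
case: e4 e40 e54 h1 h2 => [|f] // _ e54' h1 h2 Hc'.
rewrite !subn1 /=. lia.
Qed.

Lemma e_U2 : b * (e4 - 1) + c * 3 <= T.
Proof. by rewrite /T mulnC [c * 3]mulnC. Qed.

Lemma e_U3 : b * (p - 1) + c * 2 <= T.
Proof.
have h1 : e5 * e5 <= e4 * e5 by rewrite mulnC; apply: lem_mul.
have h2 : e4 * e5 <= e4 * e4 by apply: lem_mul.
move: Hc; rewrite /T /b /a /p /e2 /q.
case: e4 e40 e54 h1 h2 => [|f] // _ e54' h1 h2 Hc'.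
rewrite !subn1 /=; lia.
Qed.

Lemma e_U4 : b * (2 * p - 1) + c * 0 <= T.
Proof.
have h1 : e5 * e5 <= e4 * e5 by rewrite mulnC; apply: lem_mul.
have h2 : e4 * e5 <= e4 * e4 by apply: lem_mul.
move: Hc; rewrite /T /b /a /p /e2 /q.
case: e4 e40 e54 h1 h2 => [|f] // _ e54' h1 h2 Hc'.
rewrite !subn1 /=; lia.
Qed.

Lemma e_U1' : b * (a - 1) + c * 0 <= T.
Proof. apply: leq_trans e_U1; lia. Qed.

Lemma e_three s : s < a -> three a b c p T s.
Proof.
move=> sa.
have [sp|sp] := leqP p s.
- have [s3|s3] := leqP (3 * p) (s + a).
  + exists s, 0, (s - p), 1, (s + a - 3 * p), 3; split.
    * apply: (@pg _ _ _ _ _ _ _ _ 0 (a - 1)); [lia|lia|exact: e_U1'].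
    * apply: (@pg _ _ _ _ _ _ _ _ 0 (a - 1)); [lia|lia|exact: e_U1].
    * apply: (@pg _ _ _ _ _ _ _ _ 1 (e4 - 1)); [lia|rewrite /a /p /e2 /q in sa s3 *; lia|exact: e_U2].
    * split; case => *; lia.
  + exists s, 0, (s - p), 1, (s + a - 2 * p), 2; split.
    * apply: (@pg _ _ _ _ _ _ _ _ 0 (a - 1)); [lia|lia|exact: e_U1'].
    * apply: (@pg _ _ _ _ _ _ _ _ 0 (a - 1)); [lia|lia|exact: e_U1].
    * apply: (@pg _ _ _ _ _ _ _ _ 1 (p - 1)); [rewrite /a /p /e2 /q in sa s3 sp *; lia|lia|exact: e_U3].
    * split; case => *; lia.
- have [s2|s2] := leqP (2 * p) (s + a).
  + exists s, 0, (s + a - p), 1, (s + a - 2 * p), 2; split.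
    * apply: (@pg _ _ _ _ _ _ _ _ 0 (a - 1)); [lia|lia|exact: e_U1'].
    * apply: (@pg _ _ _ _ _ _ _ _ 1 (a - 1)); [rewrite /a /p /e2 /q in sa s2 sp *; lia|rewrite /a /p /e2 /q in sa s2 sp *; lia|exact: e_U1].
    * apply: (@pg _ _ _ _ _ _ _ _ 1 (p - 1)); [rewrite /a /p /e2 /q in sa s2 sp *; lia|rewrite /a /p /e2 /q in sa s2 sp *; lia|exact: e_U3].
    * split; case => *; lia.
  + exists s, 0, (s + a - p), 1, (s + a), 0; split.
    * apply: (@pg _ _ _ _ _ _ _ _ 0 (a - 1)); [lia|lia|exact: e_U1'].
    * apply: (@pg _ _ _ _ _ _ _ _ 1 (a - 1)); [rewrite /a /p /e2 /q in sa s2 sp *; lia|rewrite /a /p /e2 /q in sa s2 sp *; lia|exact: e_U1].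
    * apply: (@pg _ _ _ _ _ _ _ _ 1 (2 * p - 1)); [lia|lia|exact: e_U4].
    * split; case => *; lia.
Qed.

Lemma e_low x y z t : y + p * z + a * t = e4 - 1 + 3 * p -> x + (3 * q + 1) = b * t + q * z ->
  (y, z) = (a - 1, 0) \/ (y, z) = (a - 1 - p, 1).
Proof.
rewrite /b /a /p /e2 /q => H1 H2.
case: t H1 H2 => [|[|t]] H1 H2.
- case: z H1 H2 => [|[|[|[|z]]]] H1 H2; rewrite ?mulnS ?muln0 in H1 H2; lia.
- case: z H1 H2 => [|[|z]] H1 H2; rewrite ?mulnS ?muln0 in H1 H2; try lia.
  + left; congr (_, _); lia.
  + right; congr (_, _); lia.
- rewrite ?mulnS in H1; lia.
Qed.

Lemma e_arith : [/\ a <= T, T - a + a * (3 * q + 1) = b * (e4 - 1 + 3 * p)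
    & q * (e4 - 1 + 3 * p) < p * (3 * q + 1) + c].
Proof.
have h1 : e5 * e5 <= e4 * e5 by rewrite mulnC; apply: lem_mul.
have h2 : e4 * e5 <= e4 * e4 by apply: lem_mul.
move: Hc; rewrite /T /b /a /p /e2 /q.
case: e4 e40 e54 h1 h2 => [|f] // _ e54' h1 h2 Hc'.
rewrite !subn1 /=; split; lia.
Qed.

End E.

Lemma case_e i G : 5 <= i ->
  G = Posz ((fib (i - 4) - 1) * fib (i + 2) + 3 * fib (2 * i - 1) - fib i) ->
  is_gp 2 (fib i) (fib (i + 2)) (fib (2 * i - 1)) G.
Proof.
move=> hi HG.
have Hk := fib_key i (k := i - 1) (ltac:(lia) : 2 <= i - 1).
rewrite (_ : i + (i - 1) = 2 * i - 1) in Hk; last by lia.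
rewrite (_ : i - 1 - 2 = i - 3) in Hk; last by lia.
have cop := fib_coprime2 i.
have F1 := fib_rec (ltac:(lia) : 2 <= i + 2).
rewrite (_ : i + 2 - 1 = i + 1) in F1; last by lia.
rewrite (_ : i + 2 - 2 = i) in F1; last by lia.
have F2 := fib_rec (ltac:(lia) : 2 <= i + 1).
rewrite (_ : i + 1 - 1 = i) in F2; last by lia.
rewrite (_ : i + 1 - 2 = i - 1) in F2; last by lia.
have F3 := fib_rec (ltac:(lia) : 2 <= i).
have F4 := fib_rec (ltac:(lia) : 2 <= i - 1).
rewrite (_ : i - 1 - 1 = i - 2) in F4; last by lia.
rewrite (_ : i - 1 - 2 = i - 3) in F4; last by lia.
have F5 := fib_rec (ltac:(lia) : 2 <= i - 2).
rewrite (_ : i - 2 - 1 = i - 3) in F5; last by lia.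
rewrite (_ : i - 2 - 2 = i - 4) in F5; last by lia.
have F6 := fib_rec (ltac:(lia) : 2 <= i - 3).
rewrite (_ : i - 3 - 1 = i - 4) in F6; last by lia.
rewrite (_ : i - 3 - 2 = i - 5) in F6; last by lia.
have e40 : 0 < fib (i - 4) by have := fib_pos (i - 5); rewrite (_ : (i - 5).+1 = i - 4) //; lia.
have e54 : fib (i - 5) <= fib (i - 4) by apply: fib_leq; lia.
move: HG Hk cop F1 F2 F3 F4 F5 F6 e40 e54.
set a := fib i; set b := fib (i + 2); set c := fib (2 * i - 1); set p := fib (i - 1).
set q := fib (i - 3); set e2 := fib (i - 2); set e4 := fib (i - 4); set e5 := fib (i - 5).
set a1 := fib (i + 1).
clearbody a b c p q e2 e4 e5 a1 => HG Hk cop F1 F2 F3 F4 F5 F6 e40 e54.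
have Eq : q = e4 + e5 by lia.
have Ee2 : e2 = q + e4 by lia.
have Ep : p = e2 + q by lia.
have Ea : a = p + e2 by lia.
have Eb : b = 2 * a + p by lia.
clear F1 F2 F3 F4 F5 F6; subst q e2 p a b.
have Hc := Hk.
have [aT HB Hq] := e_arith e40 e54 Hc.
apply: (case_gp _ _ _ cop Hc aT HG (e_three e40 e54 Hc) HB Hq (e_low e40 e54 Hc)); lia.
Qed.


Lemma case_small G : G = Posz 31 -> is_gp 2 (fib 4) (fib 6) (fib 7) G.
Proof.
move=> HG.
apply: (@case_gp 3 8 13 2 1 34 3 5 2 0 0 1) => //.
- move=> s; case: s => [|[|[|s]]] // _.
  + exists 0, 0, 3, 0, 1, 1; split; try (by exists 0); try (by exists 1); split; case => *; lia.
  + exists 1, 0, 0, 2, 2, 1; split; try (by exists 0); try (by exists 1); split; case => *; lia.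
  + exists 2, 0, 0, 1, 1, 2; split; try (by exists 0); try (by exists 1); split; case => *; lia.
- move=> x y z t H1 H2.
  case: t H1 H2 => [|[|t]] H1 H2; try lia.
  case: z H1 H2 => [|[|z]] H1 H2; try lia.
  + left; congr (_, _); lia.
  + right; congr (_, _); lia.
Qed.


Section F.
Variables (a b c p1 q r w : nat).
Let p := p1 + 1.
Hypotheses (q0 : 0 < q) (r2 : 2 <= r) (wp : w <= p1) (Ha : a = r * p + w + 1)
  (Hc : c + q * a = p * b) (H2 : 2 * (q * a) <= p * b).
Let T1 := b * w + (r + 2) * c.
Let T2 := b * p1 + (r + 1) * c.
Let T := maxn T1 T2.

Lemma f_pb : p * b <= 2 * c.
Proof. lia. Qed.

Lemma f_le1 X : X <= T1 -> X <= T.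
Proof. by move=> h; apply: leq_trans h (leq_maxl _ _). Qed.
Lemma f_le2 X : X <= T2 -> X <= T.
Proof. by move=> h; apply: leq_trans h (leq_maxr _ _). Qed.

Lemma f_three s : s < a -> three a b c p T s.
Proof.
move=> sa.
have pb := f_pb.
have rc : c * 2 <= c * r := lem_mul c r2.
rewrite (divn_eq s p) in sa *.
have rhop : s %% p < p by rewrite ltn_pmod // /p addn1.
move: (s %/ p) (s %% p) rhop sa => m rho rhop sa.
have mr : m <= r.
  rewrite leqNgt; apply/negP => rm.
  have : p * r.+1 <= p * m by apply: lem_mul.
  rewrite Ha in sa; lia.
case: m mr sa => [|[|m2]] mr sa.
-
  have [big|small] := leqP p (rho + w + 1).
  + exists rho, 0, (rho + w + 1 - p), (r + 1), (rho + w + 1), r; split.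
    * apply: (@pg _ _ _ _ _ _ _ _ 0 p1); [lia|lia|].
      apply: f_le2; rewrite /T2; lia.
    * apply: (@pg _ _ _ _ _ _ _ _ 1 w); [rewrite Ha /p; lia|rewrite /p in big *; lia|].
      apply: f_le1; rewrite /T1; lia.
    * apply: (@pg _ _ _ _ _ _ _ _ 1 (w + p)); [rewrite Ha /p; lia|rewrite /p in big *; lia|].
      apply: f_le1; rewrite /T1 /p in pb *; lia.
    * split; case => *; lia.
  + exists rho, 0, (rho + w + 1), r, (rho + w + 1 + p), (r - 1); split.
    * apply: (@pg _ _ _ _ _ _ _ _ 0 p1); [lia|lia|].
      apply: f_le2; rewrite /T2; lia.
    * apply: (@pg _ _ _ _ _ _ _ _ 1 p1); [rewrite Ha /p; lia|rewrite /p in small *; lia|].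
      apply: f_le2; rewrite /T2; lia.
    * apply: (@pg _ _ _ _ _ _ _ _ 1 (p1 + p)); [rewrite Ha /p; case: r r2 => [|r'] // _; rewrite subn1 /=; lia|rewrite /p in small *; lia|].
      apply: f_le2; rewrite /T2 /p in pb *; case: r r2 => [|r'] // _; rewrite subn1 /=; lia.
    * split; case => *; lia.
-
  have [big|small] := leqP p (rho + w + 1).
  + exists (1 * p + rho), 0, rho, 1, (rho + w + 1 - p), (r + 2); split.
    * apply: (@pg _ _ _ _ _ _ _ _ 0 (p + p1)); [lia|rewrite /p in rhop *; lia|].
      apply: f_le2; rewrite /T2 /p in pb *; lia.
    * apply: (@pg _ _ _ _ _ _ _ _ 0 p1); [lia|rewrite /p in rhop *; lia|].
      apply: f_le2; rewrite /T2; lia.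
    * apply: (@pg _ _ _ _ _ _ _ _ 1 w); [rewrite Ha /p; lia|rewrite /p in big rhop *; lia|].
      apply: f_le1; rewrite /T1; lia.
    * split; case => *; lia.
  + exists (1 * p + rho), 0, rho, 1, (rho + w + 1), (r + 1); split.
    * apply: (@pg _ _ _ _ _ _ _ _ 0 (p + p1)); [lia|rewrite /p in rhop *; lia|].
      apply: f_le2; rewrite /T2 /p in pb *; lia.
    * apply: (@pg _ _ _ _ _ _ _ _ 0 p1); [lia|rewrite /p in rhop *; lia|].
      apply: f_le2; rewrite /T2; lia.
    * apply: (@pg _ _ _ _ _ _ _ _ 1 p1); [rewrite Ha /p; lia|rewrite /p in small *; lia|].
      apply: f_le2; rewrite /T2; lia.
    * split; case => *; lia.
-
  have hV : b * (rho + 2 * p) + c * m2 <= T.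
    have [e|lt] := eqVneq m2.+2 r.
    + have rw : rho <= w.
        rewrite leqNgt; apply/negP => h; rewrite Ha -e in sa; lia.
      have hbw := lem_mul b rw.
      apply: f_le1; rewrite /T1 -e; lia.
    + have lt' : m2.+3 <= r by lia.
      have [d Er] : exists d, r = m2.+3 + d by exists (r - m2.+3); lia.
      have hbw := lem_mul b (ltac:(rewrite /p in rhop; lia) : rho <= p1).
      apply: f_le2; rewrite /T2 /p Er in pb *; lia.
  exists rho, m2.+2, (rho + p), m2.+1, (rho + 2 * p), m2; split.
  + apply: (@pg _ _ _ _ _ _ _ _ 0 rho); [lia|lia|].
    apply: leq_trans hV; have cpb : c <= p * b by lia. rewrite /p in cpb *; lia.
  + apply: (@pg _ _ _ _ _ _ _ _ 0 (rho + p)); [lia|lia|].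
    apply: leq_trans hV; have cpb : c <= p * b by lia. rewrite /p in cpb *; lia.
  + apply: (@pg _ _ _ _ _ _ _ _ 0 (rho + 2 * p)); [lia|lia|exact: hV].
  + split; case => *; lia.
Qed.

Lemma f_rp : 2 * p <= r * p.
Proof. by rewrite mulnC [r * p]mulnC; apply: lem_mul. Qed.

Lemma f_low1 x y z t : y + p * z + a * t = a - 1 + 2 * p ->
  x + ((r + 2) * q + 1) = b * t + q * z ->
  (y, z) = (2 * p - 1, 0) \/ (y, z) = (p - 1, 1).
Proof.
move=> H1 K2.
have rp := f_rp.
case: t H1 K2 => [|[|t]] H1 K2.
- have zr : r + 3 <= z.
    rewrite leqNgt; apply/negP => h.
    have := lem_mul q (ltac:(lia) : z <= r + 2); lia.
  have := lem_mul p zr; rewrite Ha /p in H1 *; lia.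
- rewrite muln1 in H1.
  case: z H1 K2 => [|[|z]] H1 K2.
  + left; congr (_, _); rewrite Ha /p in H1 *; lia.
  + right; congr (_, _); rewrite Ha /p in H1 *; lia.
  + rewrite mulnS mulnS in H1; rewrite Ha /p in H1 rp; lia.
- rewrite mulnS mulnS in H1; rewrite Ha /p in H1 rp; lia.
Qed.

Lemma f_low2 x y z t : y + p * z + a * t = (r + 2) * p - 1 ->
  x + ((r + 1) * q + 1) = b * t + q * z ->
  (y, z) = (2 * p - 2 - w, 0) \/ (y, z) = (p - 2 - w, 1).
Proof.
move=> H1 K2.
have rp := f_rp.
case: t H1 K2 => [|[|t]] H1 K2.
- have zr : r + 2 <= z.
    rewrite leqNgt; apply/negP => h.
    have := lem_mul q (ltac:(lia) : z <= r + 1); lia.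
  have := lem_mul p zr; rewrite /p in H1 *; lia.
- rewrite muln1 in H1.
  case: z H1 K2 => [|[|z]] H1 K2.
  + left; congr (_, _); rewrite Ha /p in H1 *; lia.
  + right; congr (_, _); rewrite Ha /p in H1 *; lia.
  + rewrite mulnS mulnS in H1; rewrite Ha /p in H1 rp; lia.
- rewrite mulnS mulnS in H1; rewrite Ha /p in H1 rp; lia.
Qed.

Lemma f_arith1 :
  [/\ a <= T1, T1 - a + a * ((r + 2) * q + 1) = b * (a - 1 + 2 * p)
    & q * (a - 1 + 2 * p) < p * ((r + 2) * q + 1) + c].
Proof.
have Hcr : c * r + q * a * r = p * b * r by rewrite -mulnDl Hc.
have qa : a <= q * a by rewrite leq_pmull.
have qw : q * w <= q * p1 := lem_mul q wp.
have qpa : q * p <= q * a by apply: lem_mul; rewrite Ha; have := f_rp; lia.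
rewrite /T1.
move: Hcr qpa; rewrite Ha /p => Hcr qpa.
have Hc' := Hc; have H2' := H2.
rewrite Ha /p in qa Hc' H2'.
split; lia.
Qed.

Lemma f_arith2 :
  [/\ a <= T2, T2 - a + a * ((r + 1) * q + 1) = b * ((r + 2) * p - 1)
    & q * ((r + 2) * p - 1) < p * ((r + 1) * q + 1) + c].
Proof.
have Hcr : c * r + q * a * r = p * b * r by rewrite -mulnDl Hc.
have qa : a <= q * a by rewrite leq_pmull.
have qw : q * w <= q * p1 := lem_mul q wp.
have qpa : q * p <= q * a by apply: lem_mul; rewrite Ha; have := f_rp; lia.
rewrite /T2.
move: Hcr qpa; rewrite Ha /p => Hcr qpa.
have Hc' := Hc; have H2' := H2.
rewrite Ha /p in qa Hc' H2'.
split; lia.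
Qed.

End F.

Lemma case_f i k G1 G2 : 3 <= i -> 3 <= k -> 2 <= (fib i - 1) %/ fib k ->
  (fib (k - 2) * fib i <= ((fib i - 1) %% fib k + 1) * fib (i + 2) ->
   G1 = Posz (fib (i + 2) * ((fib i - 1) %% fib k)
              + ((fib i - 1) %/ fib k + 2) * fib (i + k) - fib i) ->
   is_gp 2 (fib i) (fib (i + 2)) (fib (i + k)) G1) /\
  (((fib i - 1) %% fib k + 1) * fib (i + 2) < fib (k - 2) * fib i ->
   G2 = Posz (fib (i + 2) * (fib k - 1)
              + ((fib i - 1) %/ fib k + 1) * fib (i + k) - fib i) ->
   is_gp 2 (fib i) (fib (i + 2)) (fib (i + k)) G2).
Proof.
move=> hi hk hr.
have Hk := fib_key i (ltac:(lia) : 2 <= k).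
have cop := fib_coprime2 i.
have F1 := fib_rec (ltac:(lia) : 2 <= i + 2).
rewrite (_ : i + 2 - 1 = i + 1) in F1; last by lia.
rewrite (_ : i + 2 - 2 = i) in F1; last by lia.
have F2 := fib_rec (ltac:(lia) : 2 <= k).
have m1 : fib i <= fib (i + 1) by apply: fib_leq; lia.
have m2 : fib (k - 2) <= fib (k - 1) by apply: fib_leq; lia.
have a0 : 0 < fib i by have := fib_pos (i - 1); rewrite (_ : (i - 1).+1 = i) //; lia.
have q0 : 0 < fib (k - 2) by have := fib_pos (k - 3); rewrite (_ : (k - 3).+1 = k - 2) //; lia.
have pk0 : 0 < fib k by have := fib_pos (k - 1); rewrite (_ : (k - 1).+1 = k) //; lia.
have Hdiv := divn_eq (fib i - 1) (fib k).
have Hmod := ltn_pmod (fib i - 1) pk0.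
move: hr Hk cop F1 F2 m1 m2 a0 q0 pk0 Hdiv Hmod.
set a := fib i; set b := fib (i + 2); set c := fib (i + k); set p := fib k.
set q := fib (k - 2); set a1 := fib (i + 1); set p2 := fib (k - 1).
set r := (a - 1) %/ p; set w := (a - 1) %% p.
clearbody a b c p q a1 p2 r w => hr Hk cop F1 F2 m1 m2 a0 q0 pk0 Hdiv Hmod.
have qp0 : 2 * q <= p by lia.
clear F2 m2 p2.
have [p1 Ep] : exists p1, p = p1 + 1 by exists (p - 1); lia.
subst p.
have wp : w <= p1 by lia.
have Ha : a = r * (p1 + 1) + w + 1 by lia.
have qp : 2 * q <= p1 + 1 by lia.
have ab : 2 * a <= b by lia.
have H2 : 2 * (q * a) <= (p1 + 1) * b.
  have := lem_mul q ab; have := lem_mul b qp; rewrite [b * _]mulnC; lia.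
have b0 : 0 < b by lia.
have c0 : 0 < c by lia.
have Up := f_three q0 hr wp Ha Hk H2.
have [aT1 HB1 Hq1] := f_arith1 q0 hr wp Ha Hk H2.
have [aT2 HB2 Hq2] := f_arith2 q0 hr wp Ha Hk H2.
split => Hcond HG.
- have mx : maxn (b * w + (r + 2) * c) (b * p1 + (r + 1) * c) = b * w + (r + 2) * c.
    apply/maxn_idPl; lia.
  rewrite mx in Up.
  exact: (case_gp a0 b0 c0 cop Hk aT1 HG Up HB1 Hq1 (f_low1 q0 hr wp Ha Hk H2)).
- have mx : maxn (b * w + (r + 2) * c) (b * p1 + (r + 1) * c) = b * p1 + (r + 1) * c.
    apply/maxn_idPr; lia.
  rewrite mx in Up.
  rewrite (_ : p1 + 1 - 1 = p1) in HG; last by lia.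
  exact: (case_gp a0 b0 c0 cop Hk aT2 HG Up HB2 Hq2 (f_low2 q0 hr wp Ha Hk H2)).
Qed.

Unset Implicit Arguments.
Local Open Scope ring_scope.

Theorem theorem3 (i k : nat) (hi : (3 <= i)%N) (hk : (3 <= k)%N) :
  let F := fun n : nat => (fib n)%:Z in
  (* (a) *)
  ((i + 3 <= k)%N ->
     is_gp 2 (fib i) (fib (i + 2)) (fib (i + k))
       ((3 * F i - 1) * F (i + 2)%N - F i)) /\
  (* (b) *)
  (odd i ->
     is_gp 2 (fib i) (fib (i + 2)) (fib (2 * i + 2))
       ((F (i - 2)%N - 1) * F (i + 2)%N + F (2 * i + 2)%N - F i)) /\
  (~~ odd i ->
     is_gp 2 (fib i) (fib (i + 2)) (fib (2 * i + 2))
       ((F (i + 2)%N - 1) * F (i + 2)%N - F i)) /\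
  (* (c) *)
  is_gp 2 (fib i) (fib (i + 2)) (fib (2 * i + 1))
    ((F i - 1) * F (i + 2)%N + F (2 * i + 1)%N - F i) /\
  (* (d) *)
  is_gp 2 (fib i) (fib (i + 2)) (fib (2 * i))
    ((2 * F i - 1) * F (i + 2)%N - F i) /\
  (* (e) *)
  ((5 <= i)%N ->
     is_gp 2 (fib i) (fib (i + 2)) (fib (2 * i - 1)%N)
       ((F (i - 4)%N - 1) * F (i + 2)%N + 3 * F (2 * i - 1)%N - F i)) /\
  (is_gp 2 (fib 4) (fib 6) (fib 7) (F 6%N + 2 * F 7%N - F 4%N) /\
   F 6%N + 2 * F 7%N - F 4%N = 31) /\
  (* (f) *)
  (let r := ((fib i - 1) %/ fib k)%N in
   (2 <= r)%N ->
   ((F i - r%:Z * F k) * F (i + 2)%N >= F (k - 2)%N * F i ->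
      is_gp 2 (fib i) (fib (i + 2)) (fib (i + k))
        ((F i - r%:Z * F k - 1) * F (i + 2)%N + (r%:Z + 2) * F (i + k)%N - F i)) /\
   ((F i - r%:Z * F k) * F (i + 2)%N < F (k - 2)%N * F i ->
      is_gp 2 (fib i) (fib (i + 2)) (fib (i + k))
        ((F k - 1) * F (i + 2)%N + (r%:Z + 1) * F (i + k)%N - F i))).
Proof.
move=> F; rewrite {}/F.
have a0 : (0 < fib i)%N by apply: fib_gt0; lia.
have ab : (fib i <= fib (i + 2))%N by apply: fib_leq; lia.
split.
  move=> hk3; apply: case_a => //.
  nia.
split.
  move=> ho; apply: (proj1 (@case_b i _ 0 hi)) => //.
  have r0 : (0 < fib (i - 2))%N by apply: fib_gt0; lia.
  have ac : (fib i <= fib (2 * i + 2))%N by apply: fib_leq; lia.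
  nia.
split.
  move=> he; apply: (proj2 (@case_b i 0 _ hi)) => //.
  have b2 : (2 <= fib (i + 2))%N by apply: (@leq_trans (fib 3)) => //; apply: fib_leq; lia.
  nia.
split.
  apply: case_c => //.
  have ac : (fib i <= fib (2 * i + 1))%N by apply: fib_leq; lia.
  nia.
split.
  apply: case_d => //.
  nia.
split.
  move=> h5; apply: case_e => //.
  have r0 : (0 < fib (i - 4))%N by apply: fib_gt0; lia.
  have ac : (fib i <= fib (2 * i - 1))%N by apply: fib_leq; lia.
  nia.
split.
  by split => //; apply: case_small.
move=> hr.
set r := ((fib i - 1) %/ fib k)%N in hr *.
have pk0 : (0 < fib k)%N by apply: fib_gt0; lia.
have Hdiv := divn_eq (fib i - 1) (fib k).
have ac : (fib i <= fib (i + k))%N by apply: fib_leq; lia.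
rewrite -/r in Hdiv.
set w := ((fib i - 1) %% fib k)%N in Hdiv *.
have Ea : Posz (fib i) = r%:Z * Posz (fib k) + w%:Z + 1.
  have : (fib i = r * fib k + w + 1)%N by lia.
  by move=> ->; rewrite !PoszD PoszM.
have Ew : Posz (fib i) - r%:Z * Posz (fib k) = Posz (w + 1)%N.
  by rewrite Ea PoszD; lia.
rewrite Ew.
rewrite (_ : Posz (w + 1)%N - 1 = Posz w); last by rewrite PoszD addrK.
split => Hcond.
- rewrite -!PoszM lez_nat in Hcond.
  apply: (proj1 (@case_f i k _ 0 hi hk hr)) => //.
  nia.
- rewrite -!PoszM ltz_nat in Hcond.
  apply: (proj2 (@case_f i k 0 _ hi hk hr)) => //.
  have b1 : (1 <= fib (i + 2))%N by lia.
  nia.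
Qed.
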